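(* Let $D$ be a set (the input domain) and consider a multi-task model consisting of three conditional probability distributions $\mathcal{P}^1(y\mid \vec{x}),\mathcal{P}^2(y\mid \vec{x}),\mathcal{P}^3(y\mid \vec{x})$ on labels $y\in\{-1,+1\}$, for $\vec{x}\in D$, which encodes the bias $$\mathcal{P}^1(+1\mid \vec{x})+\mathcal{P}^2(+1\mid \vec{x})+\mathcal{P}^3(+1\mid \vec{x})=\tfrac{3}{2}\quad\text{for all }\vec{x}\in D.$$ Let $V=\{(\mathcal{P}^1(+1\mid\vec{x}),\mathcal{P}^2(+1\mid\vec{x}),\mathcal{P}^3(+1\mid\vec{x})) : \vec{x}\in D\}\subset[0,1]^3$. Let $\vec{v}_1=(1,0,\tfrac12)$, $\vec{v}_2=(0,1,\tfrac12)$, $\vec{v}_3=(\tfrac12,1,0)$, $\vec{v}_4=(\tfrac12,0,1)$, $\vec{v}_5=(0,\tfrac12,1)$, $\vec{v}_6=(1,\tfrac12,0)$, and for $0<\eta<1$ let $\vec{u}_i(\eta)=\eta\vec{v}_i+(1-\eta)(\tfrac12,\tfrac12,\tfrac12)$, $i=1,\dots,6$. Let $V_{2/3}$ be the convex hull of $\vec{u}_1(2/3),\dots,\vec{u}_6(2/3)$. If $V_{2/3}$ is strictly contained in the convex hull of $V$, in the sense that $V_{2/3}$ lies in the relative interior of $\mathrm{conv}(V)$ within the plane $\{z\in\mathbb{R}^3: z_1+z_2+z_3=\tfrac32\}$ (equivalently, $\mathrm{conv}(V)$ contains $\vec{u}_1(\eta),\dots,\vec{u}_6(\eta)$ for some $\eta>\tfrac23$),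 then the multi-task model is contextual, i.e. its operational scenario admits no noncontextual ontological model.
   Context: Operational scenario of the multi-task model: preparations $\mathbf{S}_{\vec{x}}$, one for each $\vec{x}\in D$; effects $\mathbf{E}^k_y$ ($k=1,2,3$, $y=\pm1$), a trivial effect $\Omega$ and a null effect $\emptyset$; operational statistics $P(\mathbf{E}^k_y\mid\mathbf{S}_{\vec{x}})=\mathcal{P}^k(y\mid\vec{x})$, $P(\Omega\mid\mathbf{S})=1$, $P(\emptyset\mid\mathbf{S})=0$. Preparation densities are finite convex combinations $s=\sum_j p_j\mathbf{S}_j$ of preparations, and effect densities are finite convex combinations $e=\sum_j q_j\mathbf{E}_j$ of effects; statistics are extended bilinearly, $P(e\mid s)=\sum_{j,l}q_l p_j P(\mathbf{E}_l\mid\mathbf{S}_j)$. Two preparation densities $s_1,s_2$ are operationally equivalent ($s_1\sim s_2$) iff $P(\mathbf{E}\mid s_1)=P(\mathbf{E}\mid s_2)$ for all effects $\mathbf{E}$; two effect densities $e_1,e_2$ are operationally equivalent iff $P(e_1\mid\mathbf{S})=P(e_2\mid\mathbf{S})$ for all preparations $\mathbf{S}$. An ontological model consists of a measure space $\Lambda$ of ontic states, a probability density $\mu_{\mathbf{S}}$ on $\Lambda$ for each preparation and a measurable response function $\xi_{\mathbf{E}}:\Lambda\to[0,1]$ for each effect, with $\xi_\Omega\equiv1$, $\xi_\emptyset\equiv0$, extended linearly to densities ($\mu_{\sum p_j\mathbf{S}_j}=\sum p_j\mu_{\mathbf{S}_j}$, $\xi_{\sum q_j\mathbf{E}_j}=\sum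 q_j\xi_{\mathbf{E}_j}$), such that $P(\mathbf{E}\mid\mathbf{S})=\int_\Lambda\mu_{\mathbf{S}}(\lambda)\xi_{\mathbf{E}}(\lambda)\,d\lambda$ for all preparations and effects. It is noncontextual if operationally equivalent preparation densities have identical distributions $\mu$ (for all $\lambda$) and operationally equivalent effect densities have identical response functions $\xi$. The multi-task model is noncontextual iff such a noncontextual ontological model exists, and contextual otherwise. *)

(* Defs.v *)
From HB Require Import structures.
From mathcomp Require Import all_boot all_order all_algebra.
From mathcomp Require Import all_classical all_reals all_analysis.

Set Implicit Arguments.
Unset Strict Implicit.
Unset Printing Implicit Defensive.

Import Order.TTheory GRing.Theory Num.Theory.
Local Open Scope ring_scope.

(* Effects of the operational scenario: E^k_y (k : 'I_3 stands for k = 1,2,3;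
   y : bool, true = +1, false = -1), the trivial effect Omega and the null
   effect. *)
Inductive effect : Type :=
  | EffE of 'I_3 & bool
  | EffOmega
  | EffNull.

Section MultiTask.
Variables (R : realType) (D : Type).

(* A multi-task model: P k x y = P^{k+1}(y | x). *)
Definition is_multitask (P : 'I_3 -> D -> bool -> R) : Prop :=
  forall k x, 0 <= P k x true /\ 0 <= P k x false /\ P k x true + P k x false = 1.

Definition opstat (P : 'I_3 -> D -> bool -> R) (E : effect) (x : D) : R :=
  match E with
  | EffE k y => P k x y
  | EffOmega => 1
  | EffNull => 0
  end.

Definition is_density (T : Type) (s : seq (R * T)) : Prop :=
  (forall i : 'I_(size s), 0 <= (tnth (in_tuple s) i).1) /\ \sum_(p <- s) p.1 = 1.

Definition opstat_dens (P : 'I_3 -> D -> bool -> R)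
    (e : seq (R * effect)) (s : seq (R * D)) : R :=
  \sum_(q <- e) \sum_(p <- s) q.1 * p.1 * opstat P q.2 p.2.

Definition prep_equiv P (s1 s2 : seq (R * D)) : Prop :=
  forall E : effect, opstat_dens P [:: (1, E)] s1 = opstat_dens P [:: (1, E)] s2.

Definition eff_equiv P (e1 e2 : seq (R * effect)) : Prop :=
  forall x : D, opstat_dens P e1 [:: (1, x)] = opstat_dens P e2 [:: (1, x)].

Definition lin_ext (T L : Type) (f : T -> L -> R) (s : seq (R * T)) (l : L) : R :=
  \sum_(p <- s) p.1 * f p.2 l.

(* An ontological model on a measure space (Lambda, m): mu x is the probability
   density of preparation S_x, xi E the response function of effect E. *)
Definition ontological_model (P : 'I_3 -> D -> bool -> R)
    (d : measure_display) (Lambda : measurableType d)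
    (m : {measure set Lambda -> \bar R})
    (mu : D -> Lambda -> R) (xi : effect -> Lambda -> R) : Prop :=
  [/\
      forall x, [/\ measurable_fun setT (mu x), (forall l, 0 <= mu x l)
                   & (\int[m]_l (mu x l)%:E = 1%:E)%E],
      forall E, measurable_fun setT (xi E) /\ (forall l, 0 <= xi E l <= 1),
      (forall l, xi EffOmega l = 1) /\ (forall l, xi EffNull l = 0)
    &
      forall E x, (\int[m]_l (mu x l * xi E l)%:E = (opstat P E x)%:E)%E].

Definition noncontextual_model P d (Lambda : measurableType d)
    (m : {measure set Lambda -> \bar R}) mu xi : Prop :=
  [/\ ontological_model P m mu xi,
      forall s1 s2, is_density s1 -> is_density s2 -> prep_equiv P s1 s2 ->
        forall l, lin_ext mu s1 l = lin_ext mu s2 l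
    & forall e1 e2, is_density e1 -> is_density e2 -> eff_equiv P e1 e2 ->
        forall l, lin_ext xi e1 l = lin_ext xi e2 l].

Definition contextual (P : 'I_3 -> D -> bool -> R) : Prop :=
  forall (d : measure_display) (Lambda : measurableType d)
    (m : {measure set Lambda -> \bar R})
    (mu : D -> Lambda -> R) (xi : effect -> Lambda -> R),
    ~ noncontextual_model P m mu xi.

(* Membership of a point z in R^3 (as 'I_3 -> R) in conv(V), where
   V = { (P^1(+1|x), P^2(+1|x), P^3(+1|x)) : x in D }. *)
Definition in_convV (P : 'I_3 -> D -> bool -> R) (z : 'I_3 -> R) : Prop :=
  exists s : seq (R * D), is_density s /\
    forall k, \sum_(p <- s) p.1 * P k p.2 true = z k.

End MultiTask.

(* The hexagon vertices v_1..v_6 (indexed 0..5) and u_i(eta). *)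
Definition vtab (R : fieldType) : seq (seq R) :=
  [:: [:: 1; 0; 2^-1]; [:: 0; 1; 2^-1]; [:: 2^-1; 1; 0];
      [:: 2^-1; 0; 1]; [:: 0; 2^-1; 1]; [:: 1; 2^-1; 0]].

Definition hexv (R : fieldType) (i : 'I_6) (k : 'I_3) : R :=
  nth 0 (nth [::] (vtab R) i) k.

Definition hexu (R : fieldType) (eta : R) (i : 'I_6) (k : 'I_3) : R :=
  eta * hexv R i k + (1 - eta) * 2^-1.

(* Main.v *)
Require Import Defs.
From HB Require Import structures.
From mathcomp Require Import all_boot all_order all_algebra.
From mathcomp Require Import all_classical all_reals all_analysis.
From mathcomp Require Import lra.
Import Order.TTheory GRing.Theory Num.Theory.
Local Open Scope ring_scope.

Lemma absb (R : realType) (a n A : R) : 0 <= a <= 2 * n -> (a - n) * A <= n * `|A|.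
Proof.
move=> /andP[h1 h2]; have [hA|hA] := lerP 0 A.
  rewrite ger0_norm //; nra.
rewrite ltr0_norm //; nra.
Qed.

Lemma pw (R : realType) (a1 a2 a3 a4 a5 a6 x1 x2 x3 : R) :
  0 <= a1 -> 0 <= a2 -> 0 <= a3 -> 0 <= a4 -> 0 <= a5 -> 0 <= a6 ->
  0 <= x1 <= 1 -> 0 <= x2 <= 1 -> 0 <= x3 <= 1 -> x1 + x2 + x3 = 3/2 ->
  a1 + a2 = a3 + a4 -> a3 + a4 = a5 + a6 -> a1 + a3 + a5 = a2 + a4 + a6 ->
  a1 * (x1 + (1 - x2)) + a2 * (x2 + (1 - x1)) + a3 * (x2 + (1 - x3))
  + a4 * (x3 + (1 - x2)) + a5 * (x3 + (1 - x1)) + a6 * (x1 + (1 - x3))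
  <= 5 * (a1 + a2).
Proof.
move=> h1 h2 h3 h4 h5 h6 /andP[y1 z1] /andP[y2 z2] /andP[y3 z3] s e1 e2 e3.
set n := (a1 + a2) / 2.
have n0 : 0 <= n by rewrite /n; lra.
have hA := @absb R a1 n (x1 - x2) ltac:(apply/andP; split; rewrite /n; lra).
have hB := @absb R a3 n (x2 - x3) ltac:(apply/andP; split; rewrite /n; lra).
have hC := @absb R a5 n (x3 - x1) ltac:(apply/andP; split; rewrite /n; lra).
have sabs : `|x1 - x2| + `|x2 - x3| + `|x3 - x1| <= 2.
  have [p|p] := lerP 0 (x1 - x2); [rewrite (ger0_norm p)|rewrite (ltr0_norm p)];
  have [q|q] := lerP 0 (x2 - x3); [rewrite (ger0_norm q)|rewrite (ltr0_norm q)|rewrite (ger0_norm q)|rewrite (ltr0_norm q)];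
  have [r|r] := lerP 0 (x3 - x1); first [rewrite (ger0_norm r); lra | rewrite (ltr0_norm r); lra].
have := ler_wpM2l n0 sabs.
move: hA hB hC; rewrite /n; nra.
Qed.

Definition scale (R : realType) (T : Type) (c : R) (s : seq (R * T)) : seq (R * T) :=
  [seq (c * p.1, p.2) | p <- s].
Arguments scale {R T} c s.

Lemma sum_scale (R : realType) (T : Type) (f : T -> R) (c : R) (s : seq (R * T)) :
  \sum_(p <- scale c s) p.1 * f p.2 = c * \sum_(p <- s) p.1 * f p.2.
Proof. by rewrite big_map big_distrr; apply: eq_bigr => p _ /=; rewrite mulrA. Qed.

Lemma sum_mix2 (R : realType) (T : Type) (f : T -> R) (a b : R) (s t : seq (R * T)) :
  \sum_(p <- scale a s ++ scale b t) p.1 * f p.2 =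
  a * \sum_(p <- s) p.1 * f p.2 + b * \sum_(p <- t) p.1 * f p.2.
Proof. by rewrite big_cat !sum_scale. Qed.

Lemma sum_mix3 (R : realType) (T : Type) (f : T -> R) (a b c : R) (s t u : seq (R * T)) :
  \sum_(p <- scale a s ++ scale b t ++ scale c u) p.1 * f p.2 =
  a * \sum_(p <- s) p.1 * f p.2 + b * \sum_(p <- t) p.1 * f p.2
  + c * \sum_(p <- u) p.1 * f p.2.
Proof. rewrite !big_cat !sum_scale; exact: addrA. Qed.

Lemma wsum (R : realType) (T : Type) (s : seq (R * T)) :
  \sum_(p <- s) p.1 = \sum_(p <- s) p.1 * (fun _ : T => (1 : R)) p.2.
Proof. by apply: eq_bigr => p _; rewrite mulr1. Qed.

Lemma is_densityP (R : realType) (T : Type) (s : seq (R * T)) :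
  is_density s <-> all (fun p => 0 <= p.1) s /\ \sum_(p <- s) p.1 = 1.
Proof.
rewrite /is_density; split=> -[h1 h2]; split=> //.
  exact: (introT (@all_tnthP _ _ (fun p : R * T => 0 <= p.1) (in_tuple s)) h1).
exact: (elimT (@all_tnthP _ _ (fun p : R * T => 0 <= p.1) (in_tuple s)) h1).
Qed.

Lemma all_scale (R : realType) (T : Type) (c : R) (s : seq (R * T)) :
  0 <= c -> all (fun p => 0 <= p.1) s -> all (fun p => 0 <= p.1) (scale c s).
Proof. by move=> hc hs; rewrite all_map; apply: sub_all hs => p /= hp; rewrite mulr_ge0. Qed.

Lemma dens_mix2 (R : realType) (T : Type) (a b : R) (s t : seq (R * T)) :
  0 <= a -> 0 <= b -> a + b = 1 -> is_density s -> is_density t ->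
  is_density (scale a s ++ scale b t).
Proof.
move=> ha hb hab /is_densityP[n1 w1] /is_densityP[n2 w2]; apply/is_densityP; split.
  by rewrite all_cat !all_scale.
by rewrite big_cat !big_map -!big_distrr /= w1 w2 !mulr1.
Qed.

Lemma dens_mix3 (R : realType) (T : Type) (a b c : R) (s t u : seq (R * T)) :
  0 <= a -> 0 <= b -> 0 <= c -> a + b + c = 1 -> is_density s -> is_density t ->
  is_density u -> is_density (scale a s ++ scale b t ++ scale c u).
Proof.
move=> ha hb hc habc /is_densityP[n1 w1] /is_densityP[n2 w2] /is_densityP[n3 w3].
apply/is_densityP; split.
  by rewrite !all_cat !all_scale.
by rewrite !big_cat !big_map -!big_distrr /= w1 w2 w3 !mulr1 addrA.
Qed.

Lemma opd1 (R : realType) (D : Type) (P : 'I_3 -> D -> bool -> R) E (s : seq (R * D)) :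
  opstat_dens P [:: (1, E)] s = \sum_(p <- s) p.1 * opstat P E p.2.
Proof. by rewrite /opstat_dens big_seq1; apply: eq_bigr => p _ /=; rewrite mul1r. Qed.

Lemma ope1 (R : realType) (D : Type) (P : 'I_3 -> D -> bool -> R) e (x : D) :
  opstat_dens P e [:: (1, x)] = \sum_(q <- e) q.1 * opstat P q.2 x.
Proof. by rewrite /opstat_dens; apply: eq_bigr => q _; rewrite big_seq1 /= mulr1. Qed.

Lemma sum_false (R : realType) (D : Type) (P : 'I_3 -> D -> bool -> R) k (s : seq (R * D)) :
  is_multitask P ->
  \sum_(p <- s) p.1 * P k p.2 false = \sum_(p <- s) p.1 - \sum_(p <- s) p.1 * P k p.2 true.
Proof.
move=> HP; rewrite -sumrB; apply: eq_bigr => p _; have [_ [_ h]] := HP k p.2.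
have -> : P k p.2 false = 1 - P k p.2 true by lra.
by rewrite mulrBr mulr1.
Qed.

Lemma prep_of_vec (R : realType) (D : Type) (P : 'I_3 -> D -> bool -> R) (s t : seq (R * D)) :
  is_multitask P -> \sum_(p <- s) p.1 = 1 -> \sum_(p <- t) p.1 = 1 ->
  (forall k, \sum_(p <- s) p.1 * P k p.2 true = \sum_(p <- t) p.1 * P k p.2 true) ->
  prep_equiv P s t.
Proof.
move=> HP ws wt hv E; rewrite !opd1.
have h1 (u : seq (R * D)) : \sum_(p <- u) p.1 * (1 : R) = \sum_(p <- u) p.1.
  by apply: eq_bigr => p _; rewrite mulr1.
case: E => [k [] | | ] /=.
- exact: hv.
- by rewrite !sum_false // hv ws wt.
- by rewrite !h1 ws wt.
- by rewrite !big1 // => p _; rewrite mulr0.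
Qed.

Lemma lin_mix2 (R : realType) (T L : Type) (f : T -> L -> R) a b s t l :
  lin_ext f (scale a s ++ scale b t) l = a * lin_ext f s l + b * lin_ext f t l.
Proof. exact: (@sum_mix2 _ _ (fun x => f x l)). Qed.

Lemma lin_mix3 (R : realType) (T L : Type) (f : T -> L -> R) a b c s t u l :
  lin_ext f (scale a s ++ scale b t ++ scale c u) l =
  a * lin_ext f s l + b * lin_ext f t l + c * lin_ext f u l.
Proof. exact: (@sum_mix3 _ _ (fun x => f x l)). Qed.

Lemma lin_scale (R : realType) (T L : Type) (f : T -> L -> R) c s l :
  lin_ext f (scale c s) l = c * lin_ext f s l.
Proof. exact: (@sum_scale _ _ (fun x => f x l)). Qed.

Lemma sum_ge0_all (R : realType) (T : Type) (w g : T -> R) (L : seq T) :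
  all (fun t => 0 <= w t) L -> (forall t, 0 <= g t) -> 0 <= \sum_(t <- L) w t * g t.
Proof.
elim: L => [|t L IH] /=; first by rewrite big_nil.
move=> /andP[h1 h2] hg; rewrite big_cons addr_ge0 ?mulr_ge0 //; exact: IH.
Qed.

Lemma intL (R : realType) (D : Type) (P : 'I_3 -> D -> bool -> R)
    (d : measure_display) (Lambda : measurableType d)
    (m : {measure set Lambda -> \bar R}) mu xi :
  ontological_model P m mu xi -> forall L : seq ((R * D) * effect),
  all (fun t => 0 <= t.1.1) L ->
  (\int[m]_l (\sum_(t <- L) t.1.1 * (mu t.1.2 l * xi t.2 l))%:E
   = (\sum_(t <- L) t.1.1 * opstat P t.2 t.1.2)%:E)%E.
Proof.
case=> Hmu Hxi _ Hst.
have mf (x : D) E : measurable_fun setT (fun l => mu x l * xi E l).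
  apply: measurable_realfun.measurable_funM; first by case: (Hmu x).
  by case: (Hxi E).
have f0 (x : D) E l : 0 <= mu x l * xi E l.
  apply: mulr_ge0; first by case: (Hmu x).
  by case: (Hxi E) => _ /(_ l) /andP[].
elim=> [|t L IH] /=.
  move=> _; rewrite big_nil; apply: integral0_eq => l _; by rewrite big_nil.
move=> /andP[t0 hL].
rewrite (eq_integral (fun l => (t.1.1 * (mu t.1.2 l * xi t.2 l))%:E +
   (\sum_(t <- L) t.1.1 * (mu t.1.2 l * xi t.2 l))%:E)%E); last first.
  by move=> l _; rewrite big_cons EFinD.
rewrite ge0_integralD //; first last.
- apply/measurable_realfun.measurable_EFinP; apply: measurable_sum => u; apply: measurable_realfun.measurable_funM => //; try exact: measurable_cst.
- move=> l _; rewrite lee_fin; apply: sum_ge0_all => //.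
- apply/measurable_realfun.measurable_EFinP; apply: measurable_realfun.measurable_funM => //; try exact: measurable_cst.
- by move=> l _; rewrite lee_fin mulr_ge0.
rewrite IH // big_cons EFinD; congr (_ + _)%E.
under eq_integral do rewrite EFinM.
rewrite ge0_integralZl //; last by move=> l _; rewrite lee_fin.
- by rewrite Hst EFinM.
- apply/measurable_realfun.measurable_EFinP; exact: mf.
Qed.

Definition k0 : 'I_3 := @Ordinal 3 0 isT.
Definition k1 : 'I_3 := @Ordinal 3 1 isT.
Definition k2 : 'I_3 := @Ordinal 3 2 isT.

Lemma sum3 (R : realType) (F : 'I_3 -> R) : \sum_(k < 3) F k = F k0 + F k1 + F k2.
Proof.
rewrite !big_ord_recl big_ord0 addr0 addrA.
by congr (F _ + F _ + F _); apply/val_inj.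
Qed.

Definition Lf (R : realType) (D : Type) (s : seq (R * D)) (E : effect) :
  seq ((R * D) * effect) := [seq (p, E) | p <- s].
Arguments Lf {R D} s E.

Lemma allLf (R : realType) (D : Type) (s : seq (R * D)) E :
  all (fun p : R * D => 0 <= p.1) s ->
  all (fun t : (R * D) * effect => 0 <= t.1.1) (Lf s E).
Proof. by rewrite all_map. Qed.

Lemma catS (R : realType) (T : Type) (F : T -> R) (a b : seq T) :
  \sum_(t <- a ++ b) F t = \sum_(t <- a) F t + \sum_(t <- b) F t.
Proof. exact: big_cat. Qed.

Lemma sumLf_op (R : realType) (D : Type) (P : 'I_3 -> D -> bool -> R) s E :
  \sum_(t <- Lf s E) t.1.1 * opstat P t.2 t.1.2 = \sum_(p <- s) p.1 * opstat P E p.2.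
Proof. by rewrite big_map. Qed.

Lemma sumLf_mu (R : realType) (D Lambda : Type) (mu : D -> Lambda -> R)
    (xi : effect -> Lambda -> R) s E l :
  \sum_(t <- Lf s E) t.1.1 * (mu t.1.2 l * xi t.2 l) = lin_ext mu s l * xi E l.
Proof.
by rewrite big_map /lin_ext big_distrl; apply: eq_bigr => p _ /=; rewrite mulrA.
Qed.

Lemma sum_mul1 (R : realType) (T : Type) (s : seq (R * T)) :
  \sum_(p <- s) p.1 * 1 = \sum_(p <- s) p.1.
Proof. by apply: eq_bigr => p _; rewrite mulr1. Qed.

Lemma measL (R : realType) (D : Type) (P : 'I_3 -> D -> bool -> R)
    (d : measure_display) (Lambda : measurableType d)
    (m : {measure set Lambda -> \bar R}) mu xi (L : seq ((R * D) * effect)) :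
  ontological_model P m mu xi ->
  measurable_fun setT (fun l => \sum_(t <- L) t.1.1 * (mu t.1.2 l * xi t.2 l)).
Proof.
case=> Hmu Hxi _ _.
apply: measurable_sum => u.
apply: measurable_realfun.measurable_funM => //; try exact: measurable_cst.
apply: measurable_realfun.measurable_funM; first by case: (Hmu u.1.2).
by case: (Hxi u.2).
Qed.

Lemma geL (R : realType) (D : Type) (P : 'I_3 -> D -> bool -> R)
    (d : measure_display) (Lambda : measurableType d)
    (m : {measure set Lambda -> \bar R}) mu xi (L : seq ((R * D) * effect)) :
  ontological_model P m mu xi -> all (fun t => 0 <= t.1.1) L ->
  forall l, 0 <= \sum_(t <- L) t.1.1 * (mu t.1.2 l * xi t.2 l).
Proof.
case=> Hmu Hxi _ _ hL l.
apply: (@sum_ge0_all _ _ (fun t => t.1.1) (fun t => mu t.1.2 l * xi t.2 l)) => // t.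
apply: mulr_ge0; first by case: (Hmu t.1.2).
by case: (Hxi t.2) => _ /(_ l) /andP[].
Qed.

Theorem theorem1 (R : realType) (D : Type) (P : 'I_3 -> D -> bool -> R) :
  is_multitask P ->
  (forall x, \sum_(k < 3) P k x true = 3 / 2) ->
  (exists eta : R, 2 / 3 < eta < 1 /\ forall i : 'I_6, in_convV P (hexu eta i)) ->
  contextual P.
Proof.
move=> HP hbias [eta [/andP[he1 he2] hconv]] d Lambda m mu xi [Hom HNCp HNCe].
have Hom' := Hom; case: Hom' => Hmu Hxi [HOm HNu] Hst.
have [s1 [d1 v1]] := hconv (@Ordinal 6 0 isT).
have [s2 [d2 v2]] := hconv (@Ordinal 6 1 isT).
have [s3 [d3 v3]] := hconv (@Ordinal 6 2 isT).
have [s4 [d4 v4]] := hconv (@Ordinal 6 3 isT).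
have [s5 [d5 v5]] := hconv (@Ordinal 6 4 isT).
have [s6 [d6 v6]] := hconv (@Ordinal 6 5 isT).
have /is_densityP[n1 w1] := d1.
have /is_densityP[n2 w2] := d2.
have /is_densityP[n3 w3] := d3.
have /is_densityP[n4 w4] := d4.
have /is_densityP[n5 w5] := d5.
have /is_densityP[n6 w6] := d6.
have h12 : (0 : R) <= 1 / 2 by lra.
have h13 : (0 : R) <= 1 / 3 by lra.
have mix2 (a b : seq (R * D)) : is_density a -> is_density b ->
    is_density (scale (1/2) a ++ scale (1/2) b).
  by move=> da db; apply: dens_mix2 => //; lra.
have mix3 (a b c : seq (R * D)) : is_density a -> is_density b -> is_density c ->
    is_density (scale (1/3) a ++ scale (1/3) b ++ scale (1/3) c).
  by move=> da db dc; apply: dens_mix3 => //; lra.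
have wt (s : seq (R * D)) : is_density s -> \sum_(p <- s) p.1 = 1.
  by case/is_densityP.
have P1 : forall l, lin_ext mu (scale (1/2) s1 ++ scale (1/2) s2) l =
                    lin_ext mu (scale (1/2) s3 ++ scale (1/2) s4) l.
  have da := mix2 s1 s2 d1 d2; have db := mix2 s3 s4 d3 d4.
  apply: HNCp => //; apply: prep_of_vec => //; try exact: wt.
  move=> k; rewrite !(@sum_mix2 _ _ (fun x => P k x true)) /= v1 v2 v3 v4.
  by case: k => [[|[|[|]]] //= hk]; rewrite /hexu /hexv /=; lra.
have P2 : forall l, lin_ext mu (scale (1/2) s3 ++ scale (1/2) s4) l =
                    lin_ext mu (scale (1/2) s5 ++ scale (1/2) s6) l.
  have da := mix2 s3 s4 d3 d4; have db := mix2 s5 s6 d5 d6.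
  apply: HNCp => //; apply: prep_of_vec => //; try exact: wt.
  move=> k; rewrite !(@sum_mix2 _ _ (fun x => P k x true)) /= v3 v4 v5 v6.
  by case: k => [[|[|[|]]] //= hk]; rewrite /hexu /hexv /=; lra.
have P3 : forall l, lin_ext mu (scale (1/3) s1 ++ scale (1/3) s3 ++ scale (1/3) s5) l =
                    lin_ext mu (scale (1/3) s2 ++ scale (1/3) s4 ++ scale (1/3) s6) l.
  have da := mix3 s1 s3 s5 d1 d3 d5; have db := mix3 s2 s4 s6 d2 d4 d6.
  apply: HNCp => //; apply: prep_of_vec => //; try exact: wt.
  move=> k; rewrite !(@sum_mix3 _ _ (fun x => P k x true)) /= v1 v2 v3 v4 v5 v6.
  by case: k => [[|[|[|]]] //= hk]; rewrite /hexu /hexv /=; lra.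
pose eH : seq (R * effect) := [:: (1/2, EffOmega); (1/2, EffNull)].
have dH : is_density eH.
  by apply/is_densityP; split; [rewrite /= h12 | rewrite !big_cons big_nil /=; lra].
pose eT : seq (R * effect) :=
  [:: (1/3, EffE k0 true); (1/3, EffE k1 true); (1/3, EffE k2 true)].
have dT : is_density eT.
  by apply/is_densityP; split; [rewrite /= h13 | rewrite !big_cons big_nil /=; lra].
have XT : forall l, lin_ext xi eT l = lin_ext xi eH l.
  apply: HNCe => // x; rewrite !ope1 !big_cons big_nil /=.
  by have := hbias x; rewrite sum3; lra.
have Xk : forall k l, lin_ext xi [:: (1/2, EffE k true); (1/2, EffE k false)] l =
                      lin_ext xi eH l.
  move=> k; apply: HNCe => //.
    by apply/is_densityP; split; [rewrite /= h12 | rewrite !big_cons big_nil /=; lra].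
  move=> x; rewrite !ope1 !big_cons big_nil /=.
  by have [_ [_ h]] := HP k x; lra.
pose LL := Lf s1 (EffE k0 true) ++ Lf s1 (EffE k1 false) ++
           Lf s2 (EffE k1 true) ++ Lf s2 (EffE k0 false) ++
           Lf s3 (EffE k1 true) ++ Lf s3 (EffE k2 false) ++
           Lf s4 (EffE k2 true) ++ Lf s4 (EffE k1 false) ++
           Lf s5 (EffE k2 true) ++ Lf s5 (EffE k0 false) ++
           Lf s6 (EffE k0 true) ++ Lf s6 (EffE k2 false).
pose RL := Lf (scale 5 s1) EffOmega ++ Lf (scale 5 s2) EffOmega.
have nLL : all (fun t => 0 <= t.1.1) LL by rewrite !all_cat !allLf.
have nRL : all (fun t => 0 <= t.1.1) RL.
  by rewrite all_cat !allLf // all_scale.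
have I1 := @intL _ _ _ _ _ _ _ _ Hom _ nLL.
have I2 := @intL _ _ _ _ _ _ _ _ Hom _ nRL.
have VL : \sum_(t <- LL) t.1.1 * opstat P t.2 t.1.2 = 6 + 6 * eta.
  rewrite !catS !sumLf_op /= !(@sum_false _ _ P _ _ HP).
  rewrite !v1 !v2 !v3 !v4 !v5 !v6 w1 w2 w3 w4 w5 w6.
  rewrite /hexu /hexv /k0 /k1 /k2 /=; lra.
have VR : \sum_(t <- RL) t.1.1 * opstat P t.2 t.1.2 = 10.
  rewrite !catS !sumLf_op !(@sum_scale _ _ (fun x => opstat P EffOmega x)) /=.
  rewrite !sum_mul1 w1 w2; lra.
have LE : (\int[m]_l (\sum_(t <- LL) t.1.1 * (mu t.1.2 l * xi t.2 l))%:E <=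
           \int[m]_l (\sum_(t <- RL) t.1.1 * (mu t.1.2 l * xi t.2 l))%:E)%E.
  apply: ge0_le_integral => //.
  - by move=> l _; rewrite lee_fin; apply: (@geL _ _ _ _ _ _ _ _ _ Hom nLL).
  - apply/measurable_realfun.measurable_EFinP; exact: (@measL _ _ _ _ _ _ _ _ _ Hom).
  - apply/measurable_realfun.measurable_EFinP; exact: (@measL _ _ _ _ _ _ _ _ _ Hom).
  move=> l _; rewrite lee_fin /LL /RL !catS !sumLf_mu !lin_scale HOm.
  have mg (s : seq (R * D)) : all (fun p => 0 <= p.1) s -> 0 <= lin_ext mu s l.
    move=> hs; apply: (@sum_ge0_all _ _ (fun p => p.1) (fun p => mu p.2 l)) => // p.
    by case: (Hmu p.2).
  have e12 := P1 l; have e34 := P2 l; have e135 := P3 l.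
  rewrite !lin_mix2 in e12 e34; rewrite !lin_mix3 in e135.
  have XTl := XT l; rewrite /lin_ext !big_cons big_nil /= HOm HNu in XTl.
  have y0 := Xk k0 l; rewrite /lin_ext !big_cons big_nil /= HOm HNu in y0.
  have y1 := Xk k1 l; rewrite /lin_ext !big_cons big_nil /= HOm HNu in y1.
  have y2 := Xk k2 l; rewrite /lin_ext !big_cons big_nil /= HOm HNu in y2.
  have b0 := (Hxi (EffE k0 true)).2 l.
  have b1 := (Hxi (EffE k1 true)).2 l.
  have b2 := (Hxi (EffE k2 true)).2 l.
  have := @pw R _ _ _ _ _ _ _ _ _ (mg _ n1) (mg _ n2) (mg _ n3) (mg _ n4) (mg _ n5) (mg _ n6) b0 b1 b2
    ltac:(lra) ltac:(lra) ltac:(lra) ltac:(lra).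
  nra.
rewrite I1 I2 VL VR lee_fin in LE.
lra.
Qed.
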